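(* Under the hypotheses of Lemma 2.2, let $\varphi(U)=\phi(U)-\phi(I)U+[T,U]$ with $T=P_1\phi(P_1)P_2+P_2\phi(P_2)P_1$. Then for all $U_{ij}\in\mathcal{U}_{ij}$ ($i,j=1,2$): (1) $\varphi(U_{11})\in\mathcal{U}_{11}$; (2) $\varphi(U_{22})\in\mathcal{U}_{22}$; (3) $P_1\varphi(U_{12})P_1=P_2\varphi(U_{12})P_2=0$; (4) $P_1\varphi(U_{21})P_1=P_2\varphi(U_{21})P_2=0$.
   Context: $\mathcal{U}=\begin{pmatrix}\mathcal{A}&\mathcal{M}\\ \mathcal{N}&\mathcal{B}\end{pmatrix}$ is a generalized matrix ring: $\mathcal{A},\mathcal{B}$ unital 2-torsion free rings, $\mathcal{M}$ a unital $(\mathcal{A},\mathcal{B})$-bimodule faithful on both sides, $\mathcal{N}$ a unital $(\mathcal{B},\mathcal{A})$-bimodule, with bimodule pairings $MN\in\mathcal{A}$, $NM\in\mathcal{B}$ satisfying $(MN)M'=M(NM')$, $(NM)N'=N(MN')$; $\mathcal{U}$ consists of $2\times2$ matrices with usual matrix operations and identity $I$. The hypotheses of Lemma 2.2: $\phi:\mathcal{U}\to\mathcal{U}$ is additive and $\phi(U)\circ V+U\circ\phi(V)=0$ whenever $UV=VU=0$. $X\circ Y=XY+YX$, $[X,Y]=XY-YX$. $P_1=\mathrm{diag}(I_{\mathcal{A}},0)$, $P_2=\mathrm{diag}(0,I_{\mathcal{B}})$, and $\mathcal{U}_{ij}=P_i\mathcal{U}P_j$. *)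

(* Defs.v *)
From HB Require Import structures.
From mathcomp Require Import all_boot all_order all_algebra.
Set Implicit Arguments. Unset Strict Implicit. Unset Printing Implicit Defensive.
Import GRing.Theory.
Local Open Scope ring_scope.

(* A generalized matrix ring (Morita context) U = [[A, M], [N, B]]:
   A, B unital rings; M an (A,B)-bimodule, N a (B,A)-bimodule (unital);
   pairings MN : M x N -> A and NM : N x M -> B which are bimodule maps,
   balanced, and satisfy (mn)m' = m(nm'), (nm)n' = n(mn'). *)
Record gmr := GMR {
  gA : nzRingType; gB : nzRingType; gM : zmodType; gN : zmodType;
  lA : gA -> gM -> gM;
  rB : gM -> gB -> gM;
  lB : gB -> gN -> gN;
  rA : gN -> gA -> gN;
  pMN : gM -> gN -> gA;
  pNM : gN -> gM -> gB;
  lA_addl : forall a a' m, lA (a + a') m = lA a m + lA a' m;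
  lA_addr : forall a m m', lA a (m + m') = lA a m + lA a m';
  lA_mul : forall a a' m, lA (a * a') m = lA a (lA a' m);
  lA_one : forall m, lA 1 m = m;
  rB_addl : forall m m' b, rB (m + m') b = rB m b + rB m' b;
  rB_addr : forall m b b', rB m (b + b') = rB m b + rB m b';
  rB_mul : forall m b b', rB m (b * b') = rB (rB m b) b';
  rB_one : forall m, rB m 1 = m;
  M_bimod : forall a m b, rB (lA a m) b = lA a (rB m b);
  lB_addl : forall b b' n, lB (b + b') n = lB b n + lB b' n;
  lB_addr : forall b n n', lB b (n + n') = lB b n + lB b n';
  lB_mul : forall b b' n, lB (b * b') n = lB b (lB b' n);
  lB_one : forall n, lB 1 n = n;
  rA_addl : forall n n' a, rA (n + n') a = rA n a + rA n' a;
  rA_addr : forall n a a', rA n (a + a') = rA n a + rA n a';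
  rA_mul : forall n a a', rA n (a * a') = rA (rA n a) a';
  rA_one : forall n, rA n 1 = n;
  N_bimod : forall b n a, rA (lB b n) a = lB b (rA n a);
  pMN_addl : forall m m' n, pMN (m + m') n = pMN m n + pMN m' n;
  pMN_addr : forall m n n', pMN m (n + n') = pMN m n + pMN m n';
  pMN_lA : forall a m n, pMN (lA a m) n = a * pMN m n;
  pMN_rA : forall m n a, pMN m (rA n a) = pMN m n * a;
  pMN_bal : forall m b n, pMN (rB m b) n = pMN m (lB b n);
  pNM_addl : forall n n' m, pNM (n + n') m = pNM n m + pNM n' m;
  pNM_addr : forall n m m', pNM n (m + m') = pNM n m + pNM n m';
  pNM_lB : forall b n m, pNM (lB b n) m = b * pNM n m;
  pNM_rB : forall n m b, pNM n (rB m b) = pNM n m * b;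
  pNM_bal : forall n a m, pNM (rA n a) m = pNM n (lA a m);
  MNM_assoc : forall m n m', lA (pMN m n) m' = rB m (pNM n m');
  NMN_assoc : forall n m n', lB (pNM n m) n' = rA n (pMN m n')
}.

Section GMat.
Variable G : gmr.

Record mat := Mat { e11 : gA G; e12 : gM G; e21 : gN G; e22 : gB G }.

Definition madd (X Y : mat) : mat :=
  Mat (e11 X + e11 Y) (e12 X + e12 Y) (e21 X + e21 Y) (e22 X + e22 Y).
Definition mopp (X : mat) : mat := Mat (- e11 X) (- e12 X) (- e21 X) (- e22 X).
Definition msub (X Y : mat) : mat := madd X (mopp Y).
Definition mzero : mat := Mat 0 0 0 0.
Definition mone : mat := Mat 1 0 0 1.
Definition mmul (X Y : mat) : mat :=
  Mat (e11 X * e11 Y + pMN (e12 X) (e21 Y))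
      (lA (e11 X) (e12 Y) + rB (e12 X) (e22 Y))
      (lB (e22 X) (e21 Y) + rA (e21 X) (e11 Y))
      (pNM (e21 X) (e12 Y) + e22 X * e22 Y).

Definition jord (X Y : mat) : mat := madd (mmul X Y) (mmul Y X).
Definition comm (X Y : mat) : mat := msub (mmul X Y) (mmul Y X).

Definition P1 : mat := Mat 1 0 0 0.
Definition P2 : mat := Mat 0 0 0 1.

Definition inUij (Pi Pj : mat) (X : mat) : Prop :=
  exists Y, X = mmul (mmul Pi Y) Pj.

End GMat.

Arguments mzero {G}.
Arguments mone {G}.
Arguments P1 {G}.
Arguments P2 {G}.

(* Main.v *)
Require Import Defs.
From HB Require Import structures.
From mathcomp Require Import all_boot all_order all_algebra.
Import GRing.Theory.
Local Open Scope ring_scope.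

Lemma dbl0 (V : zmodType) (x : V) : x = x + x -> x = 0.
Proof. by move=> h; apply: (addrI x); rewrite addr0 -h. Qed.
Lemma oppE (V W : zmodType) (f : V -> W) (fD : forall x y, f (x + y) = f x + f y) x :
  f (- x) = - f x.
Proof.
have f0 : f 0 = 0 by apply: dbl0; rewrite -fD addr0.
by apply/eqP; rewrite -addr_eq0 -fD addNr f0.
Qed.
Lemma zeroE (V W : zmodType) (f : V -> W) (fD : forall x y, f (x + y) = f x + f y) :
  f 0 = 0.
Proof. by apply: dbl0; rewrite -fD addr0. Qed.

Section S.
Variable G : gmr.
Implicit Types (a : gA G) (b : gB G) (m : gM G) (n : gN G).

Lemma lA0r a : lA a (0 : gM G) = 0. Proof. have := @zeroE _ _ (lA a) (lA_addr a); exact. Qed.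
Lemma lA0l m : lA 0 m = 0. Proof. have := @zeroE _ _ (fun x => lA x m) (fun x y => lA_addl x y m); exact. Qed.
Lemma lANr a m : lA a (- m) = - lA a m. Proof. have := @oppE _ _ (lA a) (lA_addr a); exact. Qed.
Lemma lANl a m : lA (- a) m = - lA a m. Proof. have := @oppE _ _ (fun x => lA x m) (fun x y => lA_addl x y m); exact. Qed.
Lemma rB0r m : rB m 0 = 0. Proof. have := @zeroE _ _ (rB m) (rB_addr m); exact. Qed.
Lemma rB0l b : rB 0 b = 0. Proof. have := @zeroE _ _ (fun x => rB x b) (fun x y => rB_addl x y b); exact. Qed.
Lemma rBNr b m : rB m (- b) = - rB m b. Proof. have := @oppE _ _ (rB m) (rB_addr m); exact. Qed.
Lemma rBNl b m : rB (- m) b = - rB m b. Proof. have := @oppE _ _ (fun x => rB x b) (fun x y => rB_addl x y b); exact. Qed.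
Lemma lB0r b : lB b (0 : gN G) = 0. Proof. have := @zeroE _ _ (lB b) (lB_addr b); exact. Qed.
Lemma lB0l n : lB 0 n = 0. Proof. have := @zeroE _ _ (fun x => lB x n) (fun x y => lB_addl x y n); exact. Qed.
Lemma lBNr b n : lB b (- n) = - lB b n. Proof. have := @oppE _ _ (lB b) (lB_addr b); exact. Qed.
Lemma lBNl b n : lB (- b) n = - lB b n. Proof. have := @oppE _ _ (fun x => lB x n) (fun x y => lB_addl x y n); exact. Qed.
Lemma rA0r n : rA n 0 = 0. Proof. have := @zeroE _ _ (rA n) (rA_addr n); exact. Qed.
Lemma rA0l a : rA 0 a = 0. Proof. have := @zeroE _ _ (fun x => rA x a) (fun x y => rA_addl x y a); exact. Qed.
Lemma rANr a n : rA n (- a) = - rA n a. Proof. have := @oppE _ _ (rA n) (rA_addr n); exact. Qed.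
Lemma rANl a n : rA (- n) a = - rA n a. Proof. have := @oppE _ _ (fun x => rA x a) (fun x y => rA_addl x y a); exact. Qed.
Lemma pMN0r m : pMN m 0 = 0. Proof. have := @zeroE _ _ (pMN m) (pMN_addr m); exact. Qed.
Lemma pMN0l n : pMN 0 n = 0. Proof. have := @zeroE _ _ (fun x => pMN x n) (fun x y => pMN_addl x y n); exact. Qed.
Lemma pMNNr m n : pMN m (- n) = - pMN m n. Proof. have := @oppE _ _ (pMN m) (pMN_addr m); exact. Qed.
Lemma pMNNl m n : pMN (- m) n = - pMN m n. Proof. have := @oppE _ _ (fun x => pMN x n) (fun x y => pMN_addl x y n); exact. Qed.
Lemma pNM0r n : pNM n 0 = 0. Proof. have := @zeroE _ _ (pNM n) (pNM_addr n); exact. Qed.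
Lemma pNM0l m : pNM 0 m = 0. Proof. have := @zeroE _ _ (fun x => pNM x m) (fun x y => pNM_addl x y m); exact. Qed.
Lemma pNMNr m n : pNM n (- m) = - pNM n m. Proof. have := @oppE _ _ (pNM n) (pNM_addr n); exact. Qed.
Lemma pNMNl m n : pNM (- n) m = - pNM n m. Proof. have := @oppE _ _ (fun x => pNM x m) (fun x y => pNM_addl x y m); exact. Qed.
End S.

Lemma fix1 (V : zmodType) (tor : forall v : V, v + v = 0 -> v = 0) (p x : V) :
  p + (- x + p - x) = 0 -> x = p.
Proof.
move=> h; apply/eqP; rewrite eq_sym -subr_eq0; apply/eqP; apply: tor.
by rewrite -h !addrA.
Qed.
Lemma fix2 (V : zmodType) (tor : forall v : V, v + v = 0 -> v = 0) (q w : V) :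
  q + w + w + q = 0 -> w = - q.
Proof.
move=> h; apply/eqP; rewrite -addr_eq0; apply/eqP; apply: tor.
by rewrite -h !addrA (addrC q w).
Qed.
Lemma fix3 (V : zmodType) (tor : forall v : V, v + v = 0 -> v = 0) (p x : V) :
  p + (- x + (- x + p)) = 0 -> x = p.
Proof.
move=> h; apply/eqP; rewrite eq_sym -subr_eq0; apply/eqP; apply: tor.
by rewrite -h !addrA [in RHS]addrAC.
Qed.
Lemma fix4 (V : zmodType) (tor : forall v : V, v + v = 0 -> v = 0) (q w : V) :
  w + (q + w) + q = 0 -> w = - q.
Proof.
move=> h; apply/eqP; rewrite -addr_eq0; apply/eqP; apply: tor.
by rewrite -h !addrA.
Qed.

Ltac simp := rewrite ?(lA0r, lA0l, lANr, lANl, rB0r, rB0l, rBNr, rBNl, lB0r, lB0l, lBNr, lBNl, rA0r, rA0l, rANr, rANl, pMN0r, pMN0l, pMNNr, pMNNl, pNM0r, pNM0l, pNMNr, pNMNl, mul0r, mulr0, mul1r, mulr1, addr0, add0r, oppr0, opprK, mulNr, mulrN, lA_one, rB_one, lB_one, rA_one, pMN_addl, pMN_addr, pNM_addl, pNM_addr, opprD).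

Lemma mat_ext (G : gmr) (X Y : mat G) : e11 X = e11 Y -> e12 X = e12 Y -> e21 X = e21 Y ->
  e22 X = e22 Y -> X = Y.
Proof. by case: X; case: Y => /= ???? ???? -> -> -> ->. Qed.

Theorem lemma2p5 (G : gmr)
  (torA : forall a : gA G, a + a = 0 -> a = 0)
  (torB : forall b : gB G, b + b = 0 -> b = 0)
  (faithA : forall a : gA G, (forall m : gM G, lA a m = 0) -> a = 0)
  (faithB : forall b : gB G, (forall m : gM G, rB m b = 0) -> b = 0)
  (phi : mat G -> mat G)
  (phi_add : forall X Y, phi (madd X Y) = madd (phi X) (phi Y))
  (phi_zp : forall U V, mmul U V = mzero -> mmul V U = mzero ->
       madd (jord (phi U) V) (jord U (phi V)) = mzero) :
  let T := madd (mmul (mmul P1 (phi P1)) P2) (mmul (mmul P2 (phi P2)) P1) in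
  let vphi := fun U => madd (msub (phi U) (mmul (phi mone) U)) (comm T U) in
  (forall U, inUij P1 P1 U -> inUij P1 P1 (vphi U)) /\
  (forall U, inUij P2 P2 U -> inUij P2 P2 (vphi U)) /\
  (forall U, inUij P1 P2 U ->
      mmul (mmul P1 (vphi U)) P1 = mzero /\ mmul (mmul P2 (vphi U)) P2 = mzero) /\
  (forall U, inUij P2 P1 U ->
      mmul (mmul P1 (vphi U)) P1 = mzero /\ mmul (mmul P2 (vphi U)) P2 = mzero).
Proof.
move=> T vphi.
have phi0 : phi mzero = mzero.
  have h := phi_add mzero mzero.
  have e : madd mzero mzero = (@mzero G) by apply: mat_ext => /=; rewrite addr0.
  rewrite e in h.
  apply: mat_ext => /=; apply: dbl0.
  - exact: (f_equal (@e11 G) h).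
  - exact: (f_equal (@e12 G) h).
  - exact: (f_equal (@e21 G) h).
  - exact: (f_equal (@e22 G) h).
have phiN : forall X, phi (mopp X) = mopp (phi X).
  move=> X; have h := phi_add X (mopp X).
  have e : madd X (mopp X) = (@mzero G) by apply: mat_ext => /=; rewrite subrr.
  rewrite e phi0 in h.
  apply: mat_ext => /=; apply/eqP; rewrite -addr_eq0 addrC; apply/eqP.
  - exact: (esym (f_equal (@e11 G) h)).
  - exact: (esym (f_equal (@e12 G) h)).
  - exact: (esym (f_equal (@e21 G) h)).
  - exact: (esym (f_equal (@e22 G) h)).
case E1 : (phi P1) => [a1 m1 n1 b1]; case E2 : (phi P2) => [a2 m2 n2 b2].
have z12 : mmul P1 P2 = (@mzero G) by apply: mat_ext => /=; simp.
have z21 : mmul P2 P1 = (@mzero G) by apply: mat_ext => /=; simp.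
have H := phi_zp P1 P2 z12 z21.
rewrite E1 E2 in H.
have h11 := f_equal (@e11 G) H; have h12 := f_equal (@e12 G) H;
have h21 := f_equal (@e21 G) H; have h22 := f_equal (@e22 G) H.
move: h11 h12 h21 h22 => /=; simp.
move=> /torA a20 /eqP; rewrite addr_eq0 => /eqP hm /eqP; rewrite addr_eq0 => /eqP hn /torB b10.
subst a2 b1 m1 n1.
have ET : T = Mat 0 (- m2) n2 0 by rewrite /T E1 E2; apply: mat_ext => /=; simp.
have EI : phi mone = Mat a1 0 0 b2.
  have -> : mone = madd (@P1 G) P2 by apply: mat_ext => /=; simp.
  by rewrite phi_add E1 E2; apply: mat_ext => /=; simp; rewrite ?addNr ?subrr.
split.
  move=> U [Y ->]; case: Y => a m n b.
  have -> : mmul (mmul P1 (Mat a m n b)) P1 = Mat a 0 0 0 by apply: mat_ext => /=; simp.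
  case EU : (phi (Mat a 0 0 0)) => [x y z w].
  have z1 : mmul (Mat a 0 0 0) P2 = (@mzero G) by apply: mat_ext => /=; simp.
  have z2 : mmul P2 (Mat a 0 0 0) = (@mzero G) by apply: mat_ext => /=; simp.
  have H1 := phi_zp _ _ z1 z2; rewrite EU E2 in H1.
  move: (f_equal (@e11 G) H1) (f_equal (@e12 G) H1) (f_equal (@e21 G) H1) (f_equal (@e22 G) H1) => /=; simp.
  move=> _ /eqP; rewrite addr_eq0 => /eqP hy /eqP; rewrite addr_eq0 => /eqP hz /torB hw.
  subst y z w.
  exists (vphi (Mat a 0 0 0)); rewrite /vphi ET EI EU /comm /msub; apply: mat_ext => /=; simp; by rewrite ?addNr ?subrr.
split.
  move=> U [Y ->]; case: Y => a m n b.
  have -> : mmul (mmul P2 (Mat a m n b)) P2 = Mat 0 0 0 b by apply: mat_ext => /=; simp.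
  case EU : (phi (Mat 0 0 0 b)) => [x y z w].
  have z1 : mmul (Mat 0 0 0 b) P1 = (@mzero G) by apply: mat_ext => /=; simp.
  have z2 : mmul P1 (Mat 0 0 0 b) = (@mzero G) by apply: mat_ext => /=; simp.
  have H1 := phi_zp _ _ z1 z2; rewrite EU E1 in H1.
  move: (f_equal (@e11 G) H1) (f_equal (@e12 G) H1) (f_equal (@e21 G) H1) (f_equal (@e22 G) H1) => /=; simp.
  move=> /torA hx /eqP; rewrite addr_eq0 => /eqP hy /eqP; rewrite addr_eq0 => /eqP hz _.
  subst x y z.
  exists (vphi (Mat 0 0 0 b)); rewrite /vphi ET EI EU /comm /msub; apply: mat_ext => /=; simp; by rewrite ?addNr ?subrr.
split.
  move=> U [Y ->]; case: Y => a m n b.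
  have -> : mmul (mmul P1 (Mat a m n b)) P2 = Mat 0 m 0 0 by apply: mat_ext => /=; simp.
  case EU : (phi (Mat 0 m 0 0)) => [x y z w].
  have z1 : mmul (madd P1 (Mat 0 m 0 0)) (madd P2 (mopp (Mat 0 m 0 0))) = (@mzero G)
    by apply: mat_ext => /=; simp; rewrite ?addNr ?subrr.
  have z2 : mmul (madd P2 (mopp (Mat 0 m 0 0))) (madd P1 (Mat 0 m 0 0)) = (@mzero G)
    by apply: mat_ext => /=; simp; rewrite ?addNr ?subrr.
  have z3 : mmul (madd P1 (mopp (Mat 0 m 0 0))) (madd P2 (Mat 0 m 0 0)) = (@mzero G)
    by apply: mat_ext => /=; simp; rewrite ?addNr ?subrr.
  have z4 : mmul (madd P2 (Mat 0 m 0 0)) (madd P1 (mopp (Mat 0 m 0 0))) = (@mzero G)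
    by apply: mat_ext => /=; simp; rewrite ?addNr ?subrr.
  have H1 := phi_zp _ _ z1 z2; have H2 := phi_zp _ _ z3 z4.
  rewrite !phi_add !phiN EU E1 E2 in H1 H2.
  have z5 : mmul (Mat 0 m 0 0) (Mat 0 m 0 0) = (@mzero G) by apply: mat_ext => /=; simp.
  have H3 := phi_zp _ _ z5 z5; rewrite EU in H3.
  move: (f_equal (@e11 G) H3) (f_equal (@e22 G) H3) => /=; simp.
  move: (f_equal (@e11 G) H1) (f_equal (@e22 G) H1) => /=; simp.
  move=> h1 h2 /torA q0 /torB r0; rewrite q0 r0 ?subr0 in h1 h2.
  move/(@fix1 _ torA): h1 => hx; move/(@fix2 _ torB): h2 => hw; subst x w.
  rewrite /vphi ET EI EU /comm /msub; split; apply: mat_ext => /=; simp; by rewrite ?subrr ?addNr.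
  move=> U [Y ->]; case: Y => a m n b.
  have -> : mmul (mmul P2 (Mat a m n b)) P1 = Mat 0 0 n 0 by apply: mat_ext => /=; simp.
  case EU : (phi (Mat 0 0 n 0)) => [x y z w].
  have z1 : mmul (madd P1 (Mat 0 0 n 0)) (madd P2 (mopp (Mat 0 0 n 0))) = (@mzero G)
    by apply: mat_ext => /=; simp; rewrite ?addNr ?subrr.
  have z2 : mmul (madd P2 (mopp (Mat 0 0 n 0))) (madd P1 (Mat 0 0 n 0)) = (@mzero G)
    by apply: mat_ext => /=; simp; rewrite ?addNr ?subrr.
  have z3 : mmul (madd P1 (mopp (Mat 0 0 n 0))) (madd P2 (Mat 0 0 n 0)) = (@mzero G)
    by apply: mat_ext => /=; simp; rewrite ?addNr ?subrr.
  have z4 : mmul (madd P2 (Mat 0 0 n 0)) (madd P1 (mopp (Mat 0 0 n 0))) = (@mzero G)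
    by apply: mat_ext => /=; simp; rewrite ?addNr ?subrr.
  have H1 := phi_zp _ _ z1 z2; have H2 := phi_zp _ _ z3 z4.
  rewrite !phi_add !phiN EU E1 E2 in H1 H2.
  have z5 : mmul (Mat 0 0 n 0) (Mat 0 0 n 0) = (@mzero G) by apply: mat_ext => /=; simp.
  have H3 := phi_zp _ _ z5 z5; rewrite EU in H3.
  move: (f_equal (@e11 G) H3) (f_equal (@e22 G) H3) => /=; simp.
  move: (f_equal (@e11 G) H1) (f_equal (@e22 G) H1) => /=; simp.
  move=> h1 h2 /torA q0 /torB r0; rewrite q0 r0 ?subr0 in h1 h2.
  move/(@fix3 _ torA): h1 => hx; move/(@fix4 _ torB): h2 => hw; subst x w.
  rewrite /vphi ET EI EU /comm /msub; split; apply: mat_ext => /=; simp; by rewrite ?subrr ?addNr.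
Qed.
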